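(* The class of languages representable by Xtructures over a finite alphabet $\Sigma$ is exactly the class of languages recognized by deterministic acyclic finite state automata (DAFSAs) over $\Sigma$: for every Xtructure there is a DAFSA accepting the same language, and for every DAFSA there is an Xtructure representing the same language.
   Context: Fix a finite alphabet $\Sigma$. A symbol layer is a nonempty subset $S \subseteq \Sigma$, represented as a single character, a finite disjunction of characters, or a character class. A token structure is a finite sequence $(l_1,\dots,l_n)$ of symbol layers, representing the strings $c_1\cdots c_n$ with $c_i\in l_i$. A branch is a finite sequence of token structures interleaved with fixed delimiter characters, representing the corresponding concatenations. An Xtructure $X$ is a finite set of branches and represents the language $L(X)$, the union of the languages of its branches; equivalently it is a directed acyclic graph whose nodes are symbol layers and whose edges are transitions, deterministic in that a string is never represented by more than one branch. A DAFSA is a deterministic finite automaton whose transition graph is acyclic. *)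

(* Defs.v *)
From mathcomp Require Import all_boot.
Set Implicit Arguments. Unset Strict Implicit. Unset Printing Implicit Defensive.

Section Defs.
Variable Sigma : finType.

Definition word := seq Sigma.

(* A symbol layer: a subset of Sigma (nonemptiness is required in [xtructure]).
   Single characters, disjunctions and character classes all denote such subsets. *)
Definition layer := {set Sigma}.

Definition token_structure := seq layer.

Definition in_token (t : token_structure) (w : word) : Prop :=
  size w = size t /\ all2 (fun c (l : layer) => c \in l) w t.

Inductive item := Tok of token_structure | Delim of Sigma.

Definition in_item (it : item) (w : word) : Prop :=
  match it with
  | Tok t => in_token t w
  | Delim c => w = [:: c]
  end.

Definition branch := seq item.

Definition in_branch (b : branch) (w : word) : Prop :=
  exists ws : seq word,
    size ws = size b /\ w = flatten ws /\
    (forall i, i < size b -> in_item (nth (Tok [::]) b i) (nth [::] ws i)).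

Definition item_layers_nonempty (it : item) : Prop :=
  match it with
  | Tok t => forall l, l \in t -> l != set0
  | Delim _ => True
  end.

Record xtructure := Xtructure {
  branches : seq branch;
  layers_nonempty : forall i k, i < size branches -> k < size (nth [::] branches i) ->
      item_layers_nonempty (nth (Tok [::]) (nth [::] branches i) k);
  deterministic : forall i j (w : word), i < size branches -> j < size branches ->
      in_branch (nth [::] branches i) w -> in_branch (nth [::] branches j) w -> i = j
}.

Definition in_xlang (X : xtructure) (w : word) : Prop :=
  exists2 i, i < size (branches X) & in_branch (nth [::] (branches X) i) w.

Record dafsa := Dafsa {
  state : finType;
  start : state;
  final : {set state};
  delta : state -> Sigma -> option state;
  acyclic : forall q q' (a : Sigma), delta q a = Some q' ->
      ~~ connect (fun x y => [exists c, delta x c == Some y]) q' q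
}.

Fixpoint run (A : dafsa) (q : state A) (w : word) : option (state A) :=
  match w with
  | [::] => Some q
  | c :: w' => if delta q c is Some q' then run q' w' else None
  end.

Definition accepts (A : dafsa) (w : word) : Prop :=
  exists2 q, run (start A) w = Some q & q \in final A.
End Defs.

(* Main.v *)
Require Import Defs.
From mathcomp Require Import all_boot boolp.
Set Implicit Arguments. Unset Strict Implicit. Unset Printing Implicit Defensive.

Section S.
Variable Sigma : finType.

Fixpoint allw n : seq (seq Sigma) :=
  if n is n'.+1 then [::] :: [seq c :: w | c <- enum Sigma, w <- allw n'] else [:: [::]].

Lemma mem_allw n w : (w \in allw n) = (size w <= n).
Proof.
elim: n w => [|n IH] [|c w] //=.
rewrite in_cons /=; apply/allpairsP/idP.
  by case=> [[cc ww]] [/= _ H [_ ->]]; rewrite ltnS -IH.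
by rewrite ltnS => H; exists (c, w); rewrite mem_enum IH.
Qed.

Lemma in_branch_nil (w : word Sigma) : in_branch [::] w <-> w = [::].
Proof.
split; first by case=> [[|? ?]] [] // _ [->].
by move=> ->; exists [::].
Qed.

Lemma in_branch_cons (it : item Sigma) b w : in_branch (it :: b) w <->
  exists w1 w2, [/\ w = w1 ++ w2, in_item it w1 & in_branch b w2].
Proof.
split.
  case=> [[|w1 ws]] [] //= [Hs] [->] H.
  exists w1, (flatten ws); split => //; first exact: (H 0).
  by exists ws; split => //; split => // i Hi; apply: (H i.+1).
case=> w1 [w2] [-> H1 [ws [Hs [-> H]]]].
exists (w1 :: ws); split => //=; first by rewrite Hs.
by split => // [[|i]] //= Hi; apply: H.
Qed.

Definition ilen (it : item Sigma) := if it is Tok t then size t else 1.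
Definition blen (b : branch Sigma) := sumn (map ilen b).

Lemma in_branch_size b w : in_branch b w -> size w = blen b.
Proof.
elim: b w => [|it b IH] w; first by move/in_branch_nil => ->.
case/in_branch_cons => w1 [w2] [-> H1 H2].
rewrite size_cat (IH _ H2) /blen /=; congr (_ + _).
by case: it H1 => [t [->]|c ->].
Qed.

Lemma blen_le (bs : seq (branch Sigma)) i : i < size bs ->
  blen (nth [::] bs i) <= sumn (map blen bs).
Proof.
elim: bs i => [|b bs IH] [|i] //= Hi; first exact: leq_addr.
by apply: leq_trans (IH _ Hi) (leq_addl _ _).
Qed.

Lemma in_branch_delims (u w : word Sigma) : in_branch (map (@Delim Sigma) u) w <-> w = u.
Proof.
elim: u w => [|c u IH] w /=; first exact: in_branch_nil.
rewrite in_branch_cons; split.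
  by case=> w1 [w2] [-> /= -> /IH ->].
by move=> ->; exists [:: c], u; split => //; apply/IH.
Qed.

Section Mk.
Variables (N : nat) (p : word Sigma -> bool).
Definition st := seq_sub (allw N).
Lemma nil_in : ([::] : seq Sigma) \in allw N. Proof. by rewrite mem_allw. Qed.
Definition mstart : st := Sub [::] nil_in.
Definition mfinal : {set st} := [set q : st | p (val q)].
Definition mdelta (q : st) (c : Sigma) : option st := insub (rcons (val q) c).

Lemma mdelta_size q c q' : mdelta q c = Some q' -> size (val q') = (size (val q)).+1.
Proof. by rewrite /mdelta; case: insubP => // u _ Hu [<-]; rewrite Hu size_rcons. Qed.

Lemma connect_size (x y : st) :
  connect (fun x y => [exists c, mdelta x c == Some y]) x y -> size (val x) <= size (val y).
Proof.
case/connectP => pth; elim: pth x => [|z pth IH] x /=; first by move=> _ ->.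
case/andP => /existsP [c /eqP /mdelta_size Hz] Hp Hy.
by rewrite -ltnS -Hz; apply/ltnW; rewrite ltnS; apply: IH.
Qed.

Lemma macyclic : forall q q' (a : Sigma), mdelta q a = Some q' ->
  ~~ connect (fun x y => [exists c, mdelta x c == Some y]) q' q.
Proof.
move=> q q' a /mdelta_size H; apply/negP => /connect_size.
by rewrite H ltnn.
Qed.

Definition mA : dafsa Sigma := @Dafsa Sigma st mstart mfinal mdelta macyclic.

Lemma run_val (q q' : st) w : @run _ mA q w = Some q' -> val q' = val q ++ w.
Proof.
elim: w q => [|c w IH] q /=; first by move=> [<-]; rewrite cats0.
rewrite /mdelta; case: insubP => // u _ Hu /IH ->.
by rewrite Hu cat_rcons.
Qed.

Lemma run_ex (q : st) w : size (val q ++ w) <= N -> exists q', @run _ mA q w = Some q'.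
Proof.
elim: w q => [|c w IH] q /=; first by eauto.
rewrite /mdelta; case: insubP => [u _ Hu|].
  by move=> H; apply: IH; rewrite Hu cat_rcons.
move=> /negP H1 H2; exfalso; apply: H1; rewrite mem_allw size_rcons.
by apply: leq_trans _ H2; rewrite size_cat /= addnS ltnS leq_addr.
Qed.

Lemma mA_accepts w : accepts mA w <-> size w <= N /\ p w.
Proof.
split.
  case=> q /run_val /= Hq; rewrite /mfinal inE /= Hq => Hp; split => //.
  by rewrite -mem_allw -Hq; apply: ssvalP.
case=> Hs Hp; have [q Hq] := @run_ex mstart w Hs.
exists q => //; rewrite /= /mfinal inE (run_val Hq) /=; done.
Qed.
End Mk.

Section MkX.
Variable s : seq (word Sigma).
Hypothesis Us : uniq s.
Definition xbs := map (fun u => map (@Delim Sigma) u) s.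

Lemma delims_ne (u : word Sigma) k :
  item_layers_nonempty (nth (Tok [::]) (map (@Delim Sigma) u) k).
Proof. by elim: u k => [|c u IH] [|k] //=. Qed.

Lemma xne : forall i k, i < size xbs -> k < size (nth [::] xbs i) ->
      item_layers_nonempty (nth (Tok [::]) (nth [::] xbs i) k).
Proof.
move=> i k Hi _; rewrite /xbs size_map in Hi.
by rewrite /xbs (nth_map [::]) //; apply: delims_ne.
Qed.

Lemma xdet : forall i j (w : word Sigma), i < size xbs -> j < size xbs ->
      in_branch (nth [::] xbs i) w -> in_branch (nth [::] xbs j) w -> i = j.
Proof.
move=> i j w; rewrite /xbs size_map => Hi Hj.
rewrite !(nth_map [::]) // => /in_branch_delims -> /in_branch_delims H.
by apply/eqP; rewrite -(nth_uniq [::] Hi Hj Us) H.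
Qed.

Definition mX : xtructure Sigma := @Xtructure Sigma xbs xne xdet.

Lemma mX_lang w : in_xlang mX w <-> w \in s.
Proof.
split.
  case=> i; rewrite /= /xbs size_map => Hi; rewrite (nth_map [::]) //.
  by move/in_branch_delims ->; apply: mem_nth.
move=> Hw; exists (index w s); rewrite /= /xbs ?size_map ?index_mem //.
by rewrite (nth_map [::]) ?index_mem // nth_index //; apply/in_branch_delims.
Qed.
End MkX.

Section Fin.
Variable A : dafsa Sigma.
Definition reach (q : state A) :=
  [set x | connect (fun x y => [exists c, delta x c == Some y]) q x].

Lemma run_bound (q : state A) w q' : run q w = Some q' -> size w < #|reach q|.
Proof.
elim: w q => [|c w IH] q /=.
  by move=> _; apply/card_gt0P; exists q; rewrite inE connect0.
case Hd: (delta q c) => [q1|] // /IH H; apply: (leq_ltn_trans H).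
apply: proper_card; apply/properP; split.
  apply/subsetP => x; rewrite !inE; apply: connect_trans.
  by apply: connect1; apply/existsP; exists c; rewrite Hd.
exists q; rewrite !inE ?connect0 //.
exact: (acyclic Hd).
Qed.
End Fin.
End S.

Theorem mainTheorem3 (Sigma : finType) :
  (forall X : xtructure Sigma, exists A : dafsa Sigma,
      forall w : word Sigma, accepts A w <-> in_xlang X w) /\
  (forall A : dafsa Sigma, exists X : xtructure Sigma,
      forall w : word Sigma, in_xlang X w <-> accepts A w).
Proof.
split.
  move=> X; set N := sumn (map (@blen Sigma) (branches X)).
  exists (mA N (fun w => `[< in_xlang X w >])) => w.
  rewrite mA_accepts; split; first by case=> _ /asboolP.
  move=> H; split; last exact/asboolP.
  case: H => i Hi /in_branch_size ->; exact: blen_le.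
move=> A; set N := #|state A|.
set s := undup [seq w <- allw Sigma N | `[< accepts A w >]].
exists (mX (undup_uniq [seq w <- allw Sigma N | `[< accepts A w >]])) => w.
rewrite mX_lang mem_undup mem_filter mem_allw; split.
  by case/andP => /asboolP.
move=> H; rewrite (asboolT H) /=.
case: H => q Hq _; apply: ltnW; apply: leq_trans (run_bound Hq) _.
exact: max_card.
Qed.
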